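(* Assume $\ker(K)\cap\ker(D)=\{0\}$ and let $\Psi$ be a reconstructor. Let $y^0=Kx^{GT}$, and let $\{\delta_k\}_{k\in\mathbb{N}}$ be a sequence of positive noise levels with $\delta_k\to0$ as $k\to\infty$, with data $y^{\delta_k}=Kx^{GT}+e_k$, $\|e_k\|_2\le\delta_k$. For each $k$ let $x^*_{\Psi,\delta_k}$ be the unique minimizer over $\mathcal{X}$ of $\mathcal{J}_{\Psi,\delta_k}(x)=\|Kx-y^{\delta_k}\|_2^2+\lambda\|w(\Psi(y^{\delta_k}))\odot|Dx|\|_1$, and let $x^*_{\Psi,0}$ denote the unique minimizer over $\mathcal{X}$ of $\mathcal{J}_{\Psi,0}(x)=\|Kx-y^{0}\|_2^2+\lambda\|w(\Psi(y^{0}))\odot|Dx|\|_1$. Then $\{x^*_{\Psi,\delta_k}\}_{k\in\mathbb{N}}$ has a convergent subsequence whose limit is $x^*_{\Psi,0}$.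
   Context: Let $K\in\mathbb{R}^{m\times n}$ with $m\le n$, and let $D_h,D_v\in\mathbb{R}^{n\times n}$ be the discrete horizontal and vertical difference operators; $Dx=\begin{bmatrix}D_hx\\ D_vx\end{bmatrix}\in\mathbb{R}^{2n}$, and $|Dx|\in\mathbb{R}^n$, $(|Dx|)_i=\sqrt{(D_hx)_i^2+(D_vx)_i^2}$. $\mathcal{X}=\{x\in\mathbb{R}^n: x_i\ge 0\ \forall i\}$; $x^{GT}\in\mathcal{X}$ is fixed. Fix $\lambda>0$, $\eta>0$, $p\in(0,1)$, and for $\tilde x\in\mathbb{R}^n$ define $(w(\tilde{x}))_i=\big(\eta/\sqrt{\eta^2+(|D\tilde{x}|)_i^2}\big)^{1-p}$. A reconstructor is a Lipschitz continuous map $\Psi:\mathbb{R}^m\to\mathbb{R}^n$. $\odot$ is the entrywise product. *)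

(* Defs.v *)
From HB Require Import structures.
From mathcomp Require Import all_boot all_order all_algebra.
From mathcomp Require Import all_classical all_reals all_analysis.
Set Implicit Arguments. Unset Strict Implicit. Unset Printing Implicit Defensive.
Import Order.TTheory GRing.Theory Num.Theory.
Local Open Scope ring_scope.

Section Defs.
Variable R : realType.

Definition norm2 (k : nat) (v : 'cV[R]_k) : R :=
  Num.sqrt (\sum_(i < k) (v i 0) ^+ 2).

(* |Dx| in R^n, with Dx = [D_h x; D_v x] *)
Definition absD (n : nat) (Dh Dv : 'M[R]_n) (x : 'cV[R]_n) : 'cV[R]_n :=
  \col_i Num.sqrt (((Dh *m x) i 0) ^+ 2 + ((Dv *m x) i 0) ^+ 2).

Definition weight (n : nat) (Dh Dv : 'M[R]_n) (eta p : R) (xt : 'cV[R]_n)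
  : 'cV[R]_n :=
  \col_i powR (eta / Num.sqrt (eta ^+ 2 + (absD Dh Dv xt i 0) ^+ 2)) (1 - p).

Definition Jfun (m n : nat) (K : 'M[R]_(m, n)) (Dh Dv : 'M[R]_n)
  (lambda eta p : R) (Psi : 'cV[R]_m -> 'cV[R]_n) (y : 'cV[R]_m)
  (x : 'cV[R]_n) : R :=
  (norm2 (K *m x - y)) ^+ 2 +
  lambda * \sum_(i < n) `| weight Dh Dv eta p (Psi y) i 0 * absD Dh Dv x i 0 |.

Definition inX (n : nat) (x : 'cV[R]_n) : Prop := forall i, 0 <= x i 0.

Definition is_minimizer_X (n : nat) (J : 'cV[R]_n -> R) (x : 'cV[R]_n) : Prop :=
  inX x /\ forall z, inX z -> J x <= J z.

Definition is_unique_minimizer_X (n : nat) (J : 'cV[R]_n -> R) (x : 'cV[R]_n)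
  : Prop :=
  is_minimizer_X J x /\ forall z, is_minimizer_X J z -> z = x.

Definition lipschitz_map (m n : nat) (Psi : 'cV[R]_m -> 'cV[R]_n) : Prop :=
  exists L : R, forall y1 y2, norm2 (Psi y1 - Psi y2) <= L * norm2 (y1 - y2).

Definition trivial_common_kernel (m n : nat) (K : 'M[R]_(m, n)) (Dh Dv : 'M[R]_n)
  : Prop :=
  forall x : 'cV[R]_n, K *m x = 0 -> Dh *m x = 0 -> Dv *m x = 0 -> x = 0.

End Defs.

(* Main.v *)
Require Import Defs.
From HB Require Import structures.
From mathcomp Require Import all_boot all_order all_algebra.
From mathcomp Require Import all_classical all_reals all_analysis.
From mathcomp Require Import ring lra.
Import Order.TTheory GRing.Theory Num.Theory.
Import numFieldNormedType.Exports.
Local Open Scope ring_scope.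
Local Open Scope classical_set_scope.

Module SubHelpers.
Set Implicit Arguments. Unset Strict Implicit. Unset Printing Implicit Defensive.
Section Helpers.
Variable R : realType.

Lemma cvg_sum_ord (U : Type) (F : set_system U) (FF : Filter F) (k : nat)
  (f : 'I_k -> U -> R) (l : 'I_k -> R) :
  (forall i, f i @ F --> l i) ->
  (fun x => \sum_(i < k) f i x) @ F --> \sum_(i < k) l i.
Proof.
elim: k f l => [|k IH] f l H.
  rewrite big_ord0; under eq_fun do rewrite big_ord0; exact: cvg_cst.
rewrite big_ord_recr /=; under eq_fun do rewrite big_ord_recr /=.
apply: cvgD; last exact: H.
exact: (IH (fun i => f (widen_ord (leqnSn k) i))).
Qed.

Lemma powR_cont_pos (a q : R) : 0 < a -> {for a, continuous (fun b => powR b q)}.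
Proof.
move=> a0.
have H : (fun b => expR (q * ln b)) @ a --> expR (q * ln a).
  have H1 : (fun b => q * ln b) @ a --> q * ln a.
    apply: cvgM; [exact: cvg_cst | exact: continuous_ln].
  exact: (cvg_comp _ _ H1 (@continuous_expR R _)).
rewrite /prop_for /continuous_at /= /=.
have -> : powR a q = expR (q * ln a) by rewrite /powR gt_eqF.
have E : {near a, (fun b => expR (q * ln b)) =1 (fun b => powR b q)}.
  have H0 := @cvgr_gt R R (nbhs a) _ (fun b : R => b) a cvg_id 0 a0.
  near=> b. rewrite /powR gt_eqF //. near: b. exact: H0.
exact: cvg_trans (near_eq_cvg E) H.
Unshelve. all: by end_near. Qed.


Section EC.
Variable T : topologicalType.

Definition ECat a b (f : T -> 'M[R]_(a,b)) (t0 : T) :=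
  forall i j, {for t0, continuous (fun t => f t i j)}.
Arguments ECat {a b}.

Lemma EC_mul a b c (M : 'M[R]_(a,b)) (f : T -> 'M[R]_(b,c)) (t0 : T) :
  ECat f t0 -> ECat (fun t => M *m f t) t0.
Proof.
move=> H i j.
have -> : (fun t => (M *m f t) i j) = (fun t => \sum_k M i k * f t k j).
  by apply/funext => t; rewrite mxE.
rewrite /prop_for /continuous_at /=.
apply: cvg_sum_ord => k; apply: cvgM; [exact: cvg_cst | exact: H].
Qed.

Lemma EC_sub a b (f g : T -> 'M[R]_(a,b)) (t0 : T) :
  ECat f t0 -> ECat g t0 -> ECat (fun t => f t - g t) t0.
Proof.
move=> Hf Hg i j.
have -> : (fun t => (f t - g t) i j) = (fun t => f t i j - g t i j).
  by apply/funext => t; rewrite !mxE.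
rewrite /prop_for /continuous_at /=.
exact: cvgB (Hf i j) (Hg i j).
Qed.

Lemma sq_cont (g : T -> R) (t0 : T) : {for t0, continuous g} ->
  {for t0, continuous (fun t => g t ^+ 2)}.
Proof.
move=> H; rewrite /prop_for /continuous_at.
have -> : (fun t => g t ^+ 2) = (fun t => g t * g t) by apply/funext => t; rewrite expr2.
rewrite expr2; exact: cvgM.
Qed.

Lemma sqrt_cont (g : T -> R) (t0 : T) : {for t0, continuous g} ->
  {for t0, continuous (fun t => Num.sqrt (g t))}.
Proof.
move=> H; exact: (cvg_comp _ _ H (@sqrt_continuous R _)).
Qed.

Variables (n : nat) (Dh Dv : 'M[R]_n) (eta p : R).

Lemma absD_cont (f : T -> 'cV[R]_n) (t0 : T) : ECat f t0 ->
  forall i, {for t0, continuous (fun t => absD Dh Dv (f t) i 0)}.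
Proof.
move=> H i.
have -> : (fun t => absD Dh Dv (f t) i 0) =
   (fun t => Num.sqrt (((Dh *m f t) i 0) ^+ 2 + ((Dv *m f t) i 0) ^+ 2)).
  by apply/funext => t; rewrite mxE.
rewrite /prop_for /continuous_at /=.
apply: sqrt_cont; apply: cvgD; apply: sq_cont; exact: EC_mul.
Qed.

Lemma weight_cont (f : T -> 'cV[R]_n) (t0 : T) : 0 < eta -> ECat f t0 ->
  forall i, {for t0, continuous (fun t => weight Dh Dv eta p (f t) i 0)}.
Proof.
move=> eta0 H i.
have -> : (fun t => weight Dh Dv eta p (f t) i 0) =
   (fun t => powR (eta / Num.sqrt (eta ^+ 2 + (absD Dh Dv (f t) i 0) ^+ 2)) (1 - p)).
  by apply/funext => t; rewrite mxE.
rewrite /prop_for /continuous_at /=.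
set s := fun t => Num.sqrt (eta ^+ 2 + (absD Dh Dv (f t) i 0) ^+ 2).
have spos : forall t, 0 < s t.
  move=> t; rewrite /s sqrtr_gt0; apply: ltr_wpDr; [exact: sqr_ge0 | exact: exprn_gt0].
have Hs : {for t0, continuous s}.
  apply: sqrt_cont; apply: cvgD; first exact: cvg_cst.
  apply: sq_cont; exact: absD_cont.
have Hb : (fun t => eta / s t) @ t0 --> eta / s t0.
  apply: cvgM; first exact: cvg_cst.
  by apply: cvgV => //; rewrite gt_eqF.
have Hpos : 0 < eta / s t0 by apply: divr_gt0.
have := cvg_comp _ _ Hb (powR_cont_pos (q := 1 - p) Hpos).
by [].
Qed.

End EC.
Arguments ECat {T a b}.

Lemma EC_fst (A B : topologicalType) a b (f : A -> 'M[R]_(a,b)) (t0 : A * B) :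
  ECat f t0.1 -> ECat (fun t : A * B => f t.1) t0.
Proof. move=> H i j; have := cvg_comp _ _ (@cvg_fst _ _ (nbhs t0.1) (nbhs t0.2) _) (H i j); exact. Qed.

Lemma EC_snd (A B : topologicalType) a b (f : B -> 'M[R]_(a,b)) (t0 : A * B) :
  ECat f t0.2 -> ECat (fun t : A * B => f t.2) t0.
Proof. move=> H i j; have := cvg_comp _ _ (@cvg_snd _ _ (nbhs t0.1) (nbhs t0.2) _) (H i j); exact. Qed.

Lemma EC_id a b (M0 : 'M[R]_(a,b)) : ECat (fun M => M) M0.
Proof. move=> i j; exact: coord_continuous. Qed.

Lemma EC_tr (T : topologicalType) a b (f : T -> 'M[R]_(a,b)) (t0 : T) :
  ECat f t0 -> ECat (fun t => (f t)^T) t0.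
Proof.
move=> H i j.
have -> : (fun t => (f t)^T i j) = (fun t => f t j i) by apply/funext => t; rewrite mxE.
exact: H.
Qed.

Lemma sq_le_sum k (v : 'cV[R]_k) i : v i 0 ^+ 2 <= \sum_j v j 0 ^+ 2.
Proof.
rewrite (bigD1 i) //= lerDl; apply: sumr_ge0 => j _; exact: sqr_ge0.
Qed.

Lemma coord_le_norm2 k (v : 'cV[R]_k) i : `|v i 0| <= norm2 v.
Proof. rewrite /norm2 -sqrtr_sqr; apply: ler_wsqrtr; exact: sq_le_sum. Qed.

Lemma norm2_sq k (v : 'cV[R]_k) : norm2 v ^+ 2 = \sum_j v j 0 ^+ 2.
Proof. rewrite /norm2 sqr_sqrtr //; apply: sumr_ge0 => j _; exact: sqr_ge0. Qed.

Lemma mx_cvg_entries a b (f : nat -> 'M[R]_(a,b)) (l : 'M[R]_(a,b)) (g : nat -> R) :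
  g @ \oo --> 0 -> (forall k i j, `|f k i j - l i j| <= g k) -> f @ \oo --> l.
Proof.
move=> g0 H; apply/cvgrPdist_lt => eps e0.
have G := @cvgr_dist_lt _ R^o _ _ _ g 0 g0 _ e0.
near=> k. have gk : `|0 - g k| < eps by near: k; exact: G.
rewrite [X in X < _]/Num.Def.normr /= mx_normrE.
apply: le_lt_trans gk; apply: bigmax_le => // -[i j] _ /=.
rewrite !mxE distrC sub0r normrN; apply: le_trans (H k i j) _; exact: ler_norm.
Unshelve. all: by end_near. Qed.

Section GF.
Variables (m n : nat) (K : 'M[R]_(m, n)) (Dh Dv : 'M[R]_n) (lambda eta p : R).

Definition Gf (u : 'cV[R]_n) (y : 'cV[R]_m) (x : 'cV[R]_n) : R :=
  \sum_(i < m) ((K *m x - y) i 0) ^+ 2 +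
  lambda * \sum_(i < n) `| weight Dh Dv eta p u i 0 * absD Dh Dv x i 0 |.

Lemma JfunE Psi y x : Jfun K Dh Dv lambda eta p Psi y x = Gf (Psi y) y x.
Proof. by rewrite /Jfun /Gf norm2_sq. Qed.

Lemma Gf_cont (T : topologicalType) fu fy fx (t0 : T) : 0 < eta ->
  ECat fu t0 -> ECat fy t0 -> ECat fx t0 ->
  {for t0, continuous (fun t => Gf (fu t) (fy t) (fx t))}.
Proof.
move=> eta0 Hu Hy Hx; apply: cvgD.
  apply: cvg_sum_ord => i; apply: sq_cont; exact: (EC_sub (EC_mul (M:=K) Hx) Hy).
apply: cvgM; first exact: cvg_cst.
apply: cvg_sum_ord => i; apply: cvg_norm; apply: cvgM.
  exact: weight_cont.
exact: absD_cont.
Qed.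
End GF.

Lemma term_le_sum k (f : 'I_k -> R) i : (forall j, 0 <= f j) -> f i <= \sum_j f j.
Proof. move=> H; rewrite (bigD1 i) //= lerDl; apply: sumr_ge0 => j _; exact: H. Qed.

Lemma split_bound k1 k2 (f : 'I_k1 -> R) (g : 'I_k2 -> R) lam Y :
  0 <= lam -> (forall i, 0 <= f i) -> (forall i, 0 <= g i) ->
  \sum_i f i + lam * \sum_i g i <= Y ->
  (forall i, f i <= Y) /\ (forall i, lam * g i <= Y).
Proof.
move=> l0 hf hg h.
have s1 : 0 <= \sum_i f i by apply: sumr_ge0 => i _; exact: hf.
have s2 : 0 <= lam * \sum_i g i by apply: mulr_ge0 => //; apply: sumr_ge0 => i _; exact: hg.
split=> i.
  apply: le_trans (term_le_sum i hf) _; apply: le_trans h; by rewrite lerDl.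
apply: le_trans (_ : lam * \sum_i g i <= _).
  by apply: ler_wpM2l => //; exact: term_le_sum.
by apply: le_trans h; rewrite lerDr.
Qed.

Lemma abs_lemma (lambda A w w0 Y : R) : 0 < lambda -> 0 <= A -> 0 < w0 ->
  w0 / 2 < w -> lambda * (w * A) <= Y -> A <= 2 * Y / (lambda * w0).
Proof.
move=> hl hA0 w0p hw t1.
have hpos : 0 < lambda * w0 by apply: mulr_gt0.
rewrite ler_pdivlMr //.
have hlA : 0 <= lambda * A by apply: mulr_ge0 => //; exact: ltW.
have h := ler_wpM2l hlA (ltW hw).
have e1 : A * (lambda * w0) = 2 * (lambda * A * (w0 / 2)) by field.
have e2 : lambda * (w * A) = lambda * A * w by ring.
rewrite e1; rewrite e2 in t1; lra.
Qed.

End Helpers.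

End SubHelpers.
Import SubHelpers.
Unset Implicit Arguments.

Theorem theorem3 (R : realType) (m n : nat) (K : 'M[R]_(m, n))
  (Dh Dv : 'M[R]_n) (xGT : 'cV[R]_n) (lambda eta p : R)
  (Psi : 'cV[R]_m -> 'cV[R]_n)
  (delta : nat -> R) (e : nat -> 'cV[R]_m)
  (xs : nat -> 'cV[R]_n) (x0 : 'cV[R]_n) :
  (m <= n)%N ->
  inX xGT ->
  0 < lambda -> 0 < eta -> 0 < p -> p < 1 ->
  trivial_common_kernel K Dh Dv ->
  lipschitz_map Psi ->
  (forall k, 0 < delta k) ->
  delta @ \oo --> 0 ->
  (forall k, norm2 (e k) <= delta k) ->
  (forall k, is_unique_minimizer_X
               (Jfun K Dh Dv lambda eta p Psi (K *m xGT + e k)) (xs k)) ->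
  is_unique_minimizer_X (Jfun K Dh Dv lambda eta p Psi (K *m xGT)) x0 ->
  exists phi : nat -> nat,
    {homo phi : a b / (a < b)%N} /\ (fun j => xs (phi j)) @ \oo --> x0.
Proof.
move=> hmn hxGT hl he hp0 hp1 hker [L HL] hd0 hdc he_le hmin [[hx0X hx0min] hx0uniq].
set y := fun k => K *m xGT + e k.
set y0 := K *m xGT.
have hye : forall k, y k - y0 = e k by move=> k; rewrite /y /y0 addrAC subrr add0r.
have n2ge0 : forall k (v : 'cV[R]_k), 0 <= norm2 v by move=> k v; exact: sqrtr_ge0.
have hA : (fun k => Psi (y k)) @ \oo --> Psi y0.
  apply: (@mx_cvg_entries _ _ _ _ _ (fun k => `|L| * delta k)).
    rewrite -(mulr0 `|L|); exact: cvgM (cvg_cst _) hdc.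
  move=> k i j; rewrite (ord1 j).
  have := coord_le_norm2 (Psi (y k) - Psi y0) i; rewrite !mxE => h1.
  apply: (le_trans h1); apply: (le_trans (HL _ _)); rewrite hye.
  apply: le_trans (ler_wpM2r (n2ge0 _ _) (ler_norm L)) _.
  by apply: ler_wpM2l; [exact: normr_ge0 | exact: he_le].
have hA' : (fun k => y k) @ \oo --> y0.
  apply: (@mx_cvg_entries _ _ _ _ _ delta) => // k i j; rewrite (ord1 j).
  have -> : y k i 0 - y0 i 0 = e k i 0 by rewrite -hye !mxE.
  exact: le_trans (coord_le_norm2 _ _) (he_le k).
have hpair : (fun k => (Psi (y k), y k)) @ \oo --> (Psi y0, y0).
  exact: (@cvg_pair _ _ _ _ _ _ eventually_filter _ _ _ _ hA hA').
set W := fun k => weight Dh Dv eta p (Psi (y k)).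
set W0 := weight Dh Dv eta p (Psi y0).
have hWpos : forall u i, 0 < weight Dh Dv eta p u i 0.
  move=> u i; rewrite mxE; apply: powR_gt0; apply: divr_gt0 => //.
  rewrite sqrtr_gt0; apply: ltr_wpDr; [exact: sqr_ge0 | exact: exprn_gt0].
have hWc : forall i, (fun k => W k i 0) @ \oo --> W0 i 0.
  move=> i.
  have hc := weight_cont (Dh:=Dh) (Dv:=Dv) (p:=p) (i:=i) he (EC_id (M0 := Psi y0)).
  have := cvg_comp _ _ hA hc; exact.
have hev : \forall k \near \oo, delta k <= 1 /\ forall i, W0 i 0 / 2 < W k i 0.
  near=> k; split.
    near: k; exact: (@cvgr_le R nat _ _ delta 0 hdc 1 ltr01).
  near: k; apply: filter_forall => i; apply: (@cvgr_gt R nat _ _ _ _ (hWc i)).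
  by have := hWpos (Psi y0) i; rewrite -/W0; lra.
pose M := col_mx K (col_mx Dh Dv).
have [Lm HLm] : exists Lm : 'M[R]_(n, m + (n + n)), Lm *m M = 1%:M.
  have rf : row_free M^T.
    apply: inj_row_free => v hv.
    have : M *m v^T = 0 by rewrite -[M]trmxK -trmx_mul hv trmx0.
    rewrite mul_col_mx => /eqP; rewrite col_mx_eq0 => /andP[/eqP hK].
    rewrite mul_col_mx col_mx_eq0 => /andP[/eqP hH /eqP hV].
    by rewrite -[v]trmxK (hker _ hK hH hV) trmx0.
  have [B HB] := row_freeP rf.
  by exists B^T; rewrite -[M]trmxK -trmx_mul HB trmx1.
pose Y := \sum_(i < m) (2 * y0 i 0 ^+ 2 + 2).
have hY0 : 0 <= Y.
  apply: sumr_ge0 => i _; apply: addr_ge0 => //; apply: mulr_ge0 => //; exact: sqr_ge0.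
have hT0 : forall i, 0 <= 2 * Y / (lambda * W0 i 0).
  move=> i; apply: divr_ge0; first exact: mulr_ge0.
  by apply: mulr_ge0; [exact: ltW | exact: ltW (hWpos _ _)].
pose Bd := 1 + 4 * Y + \sum_(i < n) (2 * Y / (lambda * W0 i 0)).
have hBd1 : 1 + 4 * Y <= Bd by rewrite /Bd lerDl; apply: sumr_ge0 => i _; exact: hT0.
have hBd2 : forall i, 2 * Y / (lambda * W0 i 0) <= Bd.
  move=> i; rewrite /Bd (bigD1 i) //= addrCA lerDl.
  apply: addr_ge0; last by apply: sumr_ge0 => j _; exact: hT0.
  by apply: addr_ge0 => //; apply: mulr_ge0.
pose C := fun j : 'I_n => \sum_l `|Lm j l| * Bd.
have hbound : forall k, delta k <= 1 -> (forall i, W0 i 0 / 2 < W k i 0) ->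
    forall j, `|xs k j 0| <= C j.
  move=> k hk1 hk2.
  have hmk := (hmin k).1.2 0 (fun i => ltac:(by rewrite mxE)).
  rewrite !JfunE in hmk.
  have hG0 : Gf K Dh Dv lambda eta p (Psi (y k)) (y k) 0 = \sum_i (y k i 0) ^+ 2.
    rewrite /Gf mulmx0 sub0r; under eq_bigr do rewrite mxE sqrrN.
    rewrite [X in _ * X]big1 ?mulr0 ?addr0 // => i _.
    have -> : absD Dh Dv 0 i 0 = 0 by rewrite /absD !mulmx0 !mxE expr0n /= addr0 sqrtr0.
    by rewrite mulr0 normr0.
  have hsy : \sum_i (y k i 0) ^+ 2 <= Y.
    apply: ler_sum => i _; rewrite /y /y0 [(K *m xGT + e k) i 0]mxE.
    have he1 : `|e k i 0| <= 1 := le_trans (coord_le_norm2 _ _) (le_trans (he_le k) hk1).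
    move: he1; rewrite ler_norml => /andP[h1 h2].
    move: ((K *m xGT) i 0) (e k i 0) h1 h2 => a b h1 h2.
    have hb : b ^+ 2 <= 1 by nra.
    have hab := sqr_ge0 (a - b).
    nra.
  have hGk : Gf K Dh Dv lambda eta p (Psi (y k)) (y k) (xs k) <= Y by rewrite -hG0 in hsy; exact: le_trans hmk hsy.
  rewrite /Gf in hGk.
  have [hf hg] := split_bound
    (f := fun i => ((K *m xs k - y k) i 0) ^+ 2)
    (g := fun i => `|weight Dh Dv eta p (Psi (y k)) i 0 * absD Dh Dv (xs k) i 0|)
    (ltW hl) (fun i => sqr_ge0 _) (fun i => normr_ge0 _) hGk.
  have hKb : forall i, `|(K *m xs k) i 0| <= 1 + 4 * Y.
    move=> i.
    have h1 : ((K *m xs k - y k) i 0) ^+ 2 <= Y := hf i.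
    have h2 : (y k i 0) ^+ 2 <= Y := le_trans (sq_le_sum (y k) i) hsy.
    have h3 : (K *m xs k) i 0 = (K *m xs k - y k) i 0 + y k i 0 by rewrite !mxE subrK.
    rewrite h3; move: ((K *m xs k - y k) i 0) (y k i 0) h1 h2 => a b h1 h2.
    have hab := sqr_ge0 (a - b).
    have hs : (a + b) ^+ 2 <= 4 * Y by nra.
    have q1 := sqr_ge0 (a + b - 1); have q2 := sqr_ge0 (a + b + 1).
    rewrite ler_norml; apply/andP; split; nra.
  have hDb : forall i, `|(Dh *m xs k) i 0| <= Bd /\ `|(Dv *m xs k) i 0| <= Bd.
    move=> i.
    have hA0 : 0 <= absD Dh Dv (xs k) i 0 by rewrite [absD _ _ _ _ _]mxE; exact: sqrtr_ge0.
    have hA1 : `|(Dh *m xs k) i 0| <= absD Dh Dv (xs k) i 0.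
      rewrite [absD _ _ _ _ _]mxE -sqrtr_sqr; apply: ler_wsqrtr; rewrite lerDl; exact: sqr_ge0.
    have hA2 : `|(Dv *m xs k) i 0| <= absD Dh Dv (xs k) i 0.
      rewrite [absD _ _ _ _ _]mxE -sqrtr_sqr; apply: ler_wsqrtr; rewrite lerDr; exact: sqr_ge0.
    have t1 := hg i.
    rewrite ger0_norm in t1; last by apply: mulr_ge0 => //; exact: ltW (hWpos _ _).
    have hAb := abs_lemma hl hA0 (hWpos (Psi y0) i) (hk2 i) t1.
    have hBi := hBd2 i.
    split.
      exact: le_trans hA1 (le_trans hAb hBi).
    exact: le_trans hA2 (le_trans hAb hBi).
  have hMb : forall l, `|(M *m xs k) l 0| <= Bd.
    move=> l; rewrite /M mul_col_mx mul_col_mx.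
    rewrite -(splitK l); case: (fintype.split l) => l' /=.
      by rewrite col_mxEu; exact: le_trans (hKb l') hBd1.
    rewrite col_mxEd -(splitK l'); case: (fintype.split l') => l'' /=.
      by rewrite col_mxEu; exact: (hDb l'').1.
    by rewrite col_mxEd; exact: (hDb l'').2.
  move=> j.
  have hx : xs k = Lm *m (M *m xs k) by rewrite mulmxA HLm mul1mx.
  rewrite {1}hx mxE /C; apply: le_trans (ler_norm_sum _ _ _) _.
  apply: ler_sum => l _; rewrite normrM; apply: ler_wpM2l => //; exact: hMb.
pose rs := fun k => (xs k)^T.
have hFbox : \forall k \near \oo, (forall j, `[- C j, C j]%classic (rs k ord0 j)).
  near=> k => j.
  have [hk1 hk2] : delta k <= 1 /\ (forall i, W0 i 0 / 2 < W k i 0) by near: k; exact: hev.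
  rewrite /rs mxE /= in_itv /= -ler_norml; exact: hbound.
have := rV_compact (A := fun j => `[- C j, C j]%classic) (fun j => @segment_compact R _ _).
move=> /(_ (rs @ \oo) _ hFbox) [r [hrbox hrclu]].
have hxX : inX r^T.
  move=> i; rewrite mxE leNgt; apply/negP => hneg.
  have hB := @cvgr_lt R 'rV[R]_n (nbhs r) _ (fun v : 'rV[R]_n => v 0 i) (r 0 i) (@coord_continuous R 1 n 0 i r) 0 hneg.
  have Fr : (rs @ \oo) (range rs) by exists 0%N => // k _; exists k.
  have [v [[k _ <-] hv]] := hrclu (range rs) _ Fr (hB _).
  move: hv; rewrite /rs mxE; apply/negP; rewrite -leNgt; exact: (hmin k).1.1 i.
pose H := fun t : ('cV[R]_n * 'cV[R]_m) * 'rV[R]_n =>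
  Gf K Dh Dv lambda eta p t.1.1 t.1.2 (t.2)^T.
have Hc : forall t0, {for t0, continuous H}.
  move=> t0; apply: Gf_cont => //.
  - exact: EC_fst (EC_fst (EC_id (M0 := t0.1.1))).
  - exact: EC_fst (EC_snd (EC_id (M0 := t0.1.2))).
  - exact: EC_tr (EC_snd (EC_id (M0 := t0.2))).
have hxmin : forall z, inX z ->
    Jfun K Dh Dv lambda eta p Psi y0 r^T <= Jfun K Dh Dv lambda eta p Psi y0 z.
  move=> z hz; rewrite !JfunE leNgt; apply/negP => hlt.
  pose c := (H ((Psi y0, y0), r) + H ((Psi y0, y0), z^T)) / 2.
  have e1 : H ((Psi y0, y0), r) = Gf K Dh Dv lambda eta p (Psi y0) y0 r^T by [].
  have e2 : H ((Psi y0, y0), z^T) = Gf K Dh Dv lambda eta p (Psi y0) y0 z by rewrite /H /= trmxK.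
  have hc1 : c < H ((Psi y0, y0), r) by rewrite /c e1 e2; lra.
  have hc2 : H ((Psi y0, y0), z^T) < c by rewrite /c e1 e2; lra.
  have hxn := @cvgr_gt R (('cV[R]_n * 'cV[R]_m) * 'rV[R]_n)%type (nbhs ((Psi y0, y0), r)) _ H _ (Hc ((Psi y0, y0), r)) c hc1.
  have [[A B] /= [nA nB] sub] := hxn.
  have hp2 : (fun k => ((Psi (y k), y k), z^T)) @ \oo --> ((Psi y0, y0), z^T) :=
    @cvg_pair _ _ _ _ _ _ eventually_filter _ _ _ _ hpair (cvg_cst z^T).
  have hcv : (fun k => H ((Psi (y k), y k), z^T)) @ \oo --> H ((Psi y0, y0), z^T).
    have := cvg_comp _ _ (hp2 (nbhs_filter _) (nbhs_filter _) eventually_filter) (Hc _); exact.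
  have hz_ev := @cvgr_lt R nat _ _ _ _ hcv c hc2.
  have hA_ev : \forall k \near \oo, A (Psi (y k), y k) := hpair _ nA.
  have FA : \forall k' \near \oo, [set v | exists k, [/\ A (Psi (y k), y k),
                   H ((Psi (y k), y k), z^T) < c & v = rs k]] (rs k').
    near=> k; exists k; split; [near: k; exact: hA_ev | near: k; exact: hz_ev | reflexivity].
  have [v [[k [hAk hzk ->]] hBv]] := hrclu _ _ FA nB.
  have h1 : c < H ((Psi (y k), y k), rs k) by apply: sub; split.
  have h2 := (hmin k).1.2 z hz; rewrite !JfunE in h2.
  have e3 : H ((Psi (y k), y k), rs k) = Gf K Dh Dv lambda eta p (Psi (y k)) (y k) (xs k)
    by rewrite -[in RHS](trmxK (xs k)).
  have e4 : H ((Psi (y k), y k), z^T) = Gf K Dh Dv lambda eta p (Psi (y k)) (y k) z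
    by rewrite -[in RHS](trmxK z).
  rewrite e3 in h1; rewrite e4 in hzk.
  have := lt_trans (lt_le_trans h1 h2) hzk; by rewrite ltxx.
have hrx0 : r^T = x0 by apply: hx0uniq; split.
have hr : r = x0^T by rewrite -hrx0 trmxK.
have hclose : forall N (eps : R), 0 < eps ->
    exists k, (N < k)%N /\ forall i, `|xs k i 0 - x0 i 0| < eps.
  move=> N eps e0.
  have hB : nbhs r [set v : 'rV[R]_n | forall i, `|v 0 i - r 0 i| < eps].
    apply: (@filter_forall _ _ _ _ (nbhs_filter r)) => i.
    exact: (@cvgr_distC_lt R R^o 'rV[R]_n (nbhs r) (nbhs_filter r)
              (fun v => v 0 i) (r 0 i) (@coord_continuous R 1 n 0 i r) eps e0).
  have FN : \forall k' \near \oo, [set v | exists2 k, (N < k)%N & v = rs k] (rs k').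
    by exists N.+1 => // k hk; exists k.
  have [v [[k hk ->] hv]] := hrclu _ _ FN hB.
  exists k; split; first exact: hk.
  move=> i; have := hv i; rewrite /rs hr !mxE; exact.
have hpos : forall j : nat, 0 < (j.+1%:R : R)^-1 by move=> j; rewrite invr_gt0 ltr0Sn.
have := @choice (nat * nat) nat
  (fun Nj k => (Nj.1 < k)%N /\ forall i, `|xs k i 0 - x0 i 0| < Nj.2.+1%:R^-1)
  (fun Nj => hclose Nj.1 _ (hpos Nj.2)).
move=> [g hg].
pose phi := fix f j := if j is j'.+1 then g (f j', j) else g (0%N, 0%N).
have hphi : forall j, (phi j < phi j.+1)%N /\
    forall i, `|xs (phi j) i 0 - x0 i 0| < j.+1%:R^-1.
  move=> j; split; first exact: (hg (phi j, j.+1)).1.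
  case: j => [|j]; [exact: (hg (0%N, 0%N)).2 | exact: (hg (phi j, j.+1)).2].
exists phi; split.
  by apply: (homo_ltn ltn_trans) => j; exact: (hphi j).1.
apply: (@mx_cvg_entries _ _ _ _ _ harmonic cvg_harmonic) => j i c.
rewrite (ord1 c); apply: ltW; exact: (hphi j).2 i.
Unshelve. all: by end_near.
Qed.
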